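(* Let $\mathbf L=\{L_1,\dots,L_n\}$ be a finite multiset of positive rationals, $k\in\mathbb N_{>0}$, and let $(I,f_l,f_u)$ be an admissible restriction. Then $l^\star=\mathcal C(I,f_l,f_u)^{(k')}$, the $k'$-th largest element (with multiplicity) of $\mathcal C(I,f_l,f_u)$, where $k'=k-\sum_{i\in I}(f_l(i)-1)$.
   Context: $m(l)=\sum_{i=1}^n\lfloor L_i/l\rfloor$, $c(l)=\sum_i(\lceil L_i/l\rceil-1)$; $l$ feasible iff $m(l)\ge k$; $l^\star$ is the unique optimal cut length (feasible length minimizing $c$ among feasible lengths; equals the largest feasible length). Candidate multiset: $\mathcal C(I,f_l,f_u)=\biguplus_{i\in I}\{L_i/j: j\in\mathbb N,\ f_l(i)\le j\le f_u(i)\}$ (one occurrence per pair $(i,j)$). A triple $(I,f_l,f_u)$ with $I\subseteq[1..n]$, $f_l,f_u:I\to\mathbb N_{>0}$ is an admissible restriction if (i) for all $i\in I$, $f_l(i)=1$ or $L_i/(f_l(i)-1)$ is infeasible; (ii) for all $i\in I$, $L_i/f_u(i)$ is feasible; (iii) for all $i'\notin I$, $L_{i'}$ is feasible and $L_{i'}\ne l^\star$. $\mathbf A^{(r)}$ denotes the $r$-th largest element of multiset $\mathbf A$ counted with multiplicity. *)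

(* Defs.v *)
From HB Require Import structures.
From mathcomp Require Import all_boot all_order all_algebra.
Set Implicit Arguments. Unset Strict Implicit. Unset Printing Implicit Defensive.
Import Order.TTheory GRing.Theory Num.Theory.
Local Open Scope ring_scope.

(* The multiset L = {L_1,...,L_n} is given as a family L : 'I_n -> rat. *)

Definition mcount (n : nat) (L : 'I_n -> rat) (l : rat) : int :=
  \sum_(i < n) Num.floor (L i / l).

Definition feasible (n : nat) (L : 'I_n -> rat) (k : nat) (l : rat) : bool :=
  (0 < l) && (k%:Z <= mcount L l).

Definition is_lstar (n : nat) (L : 'I_n -> rat) (k : nat) (lstar : rat) : Prop :=
  feasible L k lstar /\ (forall l : rat, feasible L k l -> l <= lstar).

Definition admissible (n : nat) (L : 'I_n -> rat) (k : nat) (lstar : rat)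
    (I : {set 'I_n}) (fl fu : 'I_n -> nat) : Prop :=
  (forall i, i \in I -> (0 < fl i)%N /\ (0 < fu i)%N) /\
  (forall i, i \in I -> fl i = 1%N \/ ~~ feasible L k (L i / (fl i).-1%:R)) /\
  (forall i, i \in I -> feasible L k (L i / (fu i)%:R)) /\
  (forall i, i \notin I -> feasible L k (L i) /\ L i != lstar).

Definition candidates (n : nat) (L : 'I_n -> rat) (I : {set 'I_n})
    (fl fu : 'I_n -> nat) : seq rat :=
  flatten [seq [seq L i / j%:R | j <- index_iota (fl i) (fu i).+1]
          | i <- enum I].

Definition rth_largest (A : seq rat) (r : nat) : rat :=
  nth 0 (sort (fun x y : rat => y <= x) A) r.-1.

(* Main.v *)
Require Import Defs.
From HB Require Import structures.
From mathcomp Require Import lra.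
From mathcomp Require Import all_boot all_order all_algebra zify.
Import Order.TTheory GRing.Theory Num.Theory.
Local Open Scope ring_scope.

Lemma count_iota_thr (P : pred nat) f m n : (0 < m)%N ->
  (forall j, (0 < j)%N -> P j = (j <= f)%N) ->
  count P (iota m n) = (minn (m+n) f.+1 - m)%N.
Proof.
move=> m0 HP; elim: n => [|n IH]; first by rewrite /= addn0; lia.
rewrite -addn1 iotaD count_cat IH /= HP; last lia.
case: (leqP (m+n) f) => H /=; lia.
Qed.

Lemma sorted_ge_nth_ge (s : seq rat) (x : rat) p :
  sorted (fun a b : rat => b <= a) s -> (p < count (fun y => (x <= y)%R) s)%N ->
  x <= nth 0 s p.
Proof.
elim: s p => [|y t IH] p //= Hs.
have Ht := path_sorted Hs.
have Htr : transitive (fun a b : rat => b <= a) by move=> b a c h1 h2; exact: le_trans h2 h1.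
have Hall := order_path_min Htr Hs.
case: p => [|p] /=.
  case: (lerP x y) => // Hxy /= Hc.
  have : count (fun y0 => x <= y0) t = 0%N.
    apply/eqP; rewrite -leqn0 leqNgt -has_count; apply/negP => /hasP [z zt xz].
    move/allP: Hall => /(_ z zt) zy.
    by move: (le_lt_trans xz (le_lt_trans zy Hxy)); rewrite ltxx.
  by move=> H; rewrite H in Hc.
move=> Hc; apply: IH => //; move: Hc; case: (x <= y) => /=; lia.
Qed.

Lemma sorted_ge_nth_le (s : seq rat) (x : rat) p :
  sorted (fun a b : rat => b <= a) s -> (p < size s)%N ->
  (count (fun y => (x < y)%R) s <= p)%N -> nth 0 s p <= x.
Proof.
elim: s p => [|y t IH] p //= Hs.
have Ht := path_sorted Hs.
have Htr : transitive (fun a b : rat => b <= a) by move=> b a c h1 h2; exact: le_trans h2 h1.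
have Hall := order_path_min Htr Hs.
case: p => [|p] /=.
  by case: (ltrP x y).
move=> Hp Hc; case: (ltrP x y) => Hxy.
  apply: IH => //; move: Hc; rewrite Hxy /=; lia.
apply: le_trans Hxy; move/allP: Hall; apply; exact: mem_nth.
Qed.

Definition fthr (Li ls : rat) : nat := `|Num.floor (Li/ls)|%N.
Definition gthr (Li ls : rat) : nat := `|Num.ceil (Li/ls) - 1|%N.

Lemma fthrE (Li ls : rat) : 0 < Li -> 0 < ls -> Num.floor (Li/ls) = (fthr Li ls)%:Z.
Proof.
move=> H1 H2; rewrite /fthr gez0_abs // floor_ge0; exact/ltW/divr_gt0.
Qed.

Lemma Pge_thr (Li ls : rat) j : 0 < Li -> 0 < ls -> (0 < j)%N ->
  (ls <= Li / j%:R) = (j <= fthr Li ls)%N.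
Proof.
move=> H1 H2 Hj.
rewrite ler_pdivlMr ?ltr0n // mulrC -ler_pdivlMr //.
rewrite -lez_nat -fthrE // floor_ge_int //.
Qed.

Lemma Pgt_thr (Li ls : rat) j : 0 < Li -> 0 < ls -> (0 < j)%N ->
  (ls < Li / j%:R) = (j <= gthr Li ls)%N.
Proof.
move=> H1 H2 Hj.
rewrite ltr_pdivlMr ?ltr0n // mulrC -ltr_pdivlMr //.
have Hc : 0 < Num.ceil (Li/ls) by rewrite ceil_gt0 divr_gt0.
rewrite -(ceil_gt_int (Li/ls) j).
rewrite -lez_nat /gthr.
move: Hc; set c := Num.ceil _ => Hc.
rewrite gez0_abs; lia.
Qed.

Lemma per_i (Li ls : rat) a b : 0 < Li -> 0 < ls -> (0<a)%N -> (0<b)%N ->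
  (a = 1%N \/ ls < Li / (a.-1)%:R) -> Li / b%:R <= ls ->
  [/\ (fthr Li ls <= a.-1 + count (fun j : nat => (ls <= Li / j%:R)%R) (index_iota a b.+1))%N,
      (a.-1 + count (fun j : nat => (ls < Li / j%:R)%R) (index_iota a b.+1))%N = gthr Li ls &
      gthr Li ls = 0%N \/ ls < Li / (gthr Li ls)%:R ].
Proof.
move=> H1 H2 Ha Hb Hl Hu.
have gb : (gthr Li ls < b)%N.
  by rewrite ltnNge -Pgt_thr // -leNgt.
have fb : (fthr Li ls <= b)%N.
  rewrite leqNgt; apply/negP => H.
  have := Pge_thr _ _ _ H1 H2 (ltn0Sn b); rewrite H => h1.
  have {}h1 : ls * b.+1%:R <= Li by rewrite -ler_pdivlMr ?ltr0n.
  have h2 : Li <= ls * b%:R by rewrite -ler_pdivrMr ?ltr0n.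
  rewrite -addn1 natrD mulrDr mulr1 in h1; lra.
have ga : (a.-1 <= gthr Li ls)%N.
  case: a Ha Hl => [//|[|a']] _ Hl //=.
  case: Hl => // Hl; by rewrite -Pgt_thr.
rewrite /index_iota !(count_iota_thr _ _ _ _ Ha (fun j hj => Pge_thr _ _ _ H1 H2 hj))
  !(count_iota_thr _ _ _ _ Ha (fun j hj => Pgt_thr _ _ _ H1 H2 hj)).
split; try lia.
case: (posnP (gthr Li ls)) => Hg; [by left | right].
by rewrite Pgt_thr.
Qed.

Lemma exists_lb (x : rat) (s : seq rat) : all (fun y => x < y) s ->
  exists l, x < l /\ all (fun y => l <= y) s.
Proof.
elim: s => [|y s IH] /=; first by exists (x + 1); split => //; lra.
case/andP => Hy /IH [l [Hl Ha]].
exists (Num.min l y); split; first by rewrite lt_min Hl Hy.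
rewrite ge_min lexx orbT /=.
apply/allP => z zs; move/allP: Ha => /(_ z zs) H.
by rewrite ge_min H.
Qed.

Theorem mainTheorem10 (n : nat) (L : 'I_n -> rat) (k : nat) (lstar : rat)
    (I : {set 'I_n}) (fl fu : 'I_n -> nat) :
  (forall i, 0 < L i) ->
  (0 < k)%N ->
  is_lstar L k lstar ->
  admissible L k lstar I fl fu ->
  let k' : int := k%:Z - (\sum_(i in I) ((fl i).-1)%N)%:Z in
  [/\ 1 <= k', k' <= (size (candidates L I fl fu))%:Z &
      lstar = rth_largest (candidates L I fl fu) `|k'|%N].
Proof.
move=> HL Hk [Hfeas Hmax] [Hpos [Hfl [Hfu Hout]]] k'.
have Hls : 0 < lstar by case/andP: Hfeas.
have mono : forall l, 0 < l -> l <= lstar -> feasible L k l.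
  move=> l l0 ll; rewrite /feasible l0 /=; case/andP: Hfeas => _ H.
  apply: le_trans H _; rewrite /mcount; apply: ler_sum => i _; apply: le_floor.
  by rewrite ler_pM2l // lef_pV2 ?posrE.
have infeas : forall x, 0 < x -> ~~ feasible L k x -> lstar < x.
  move=> x x0 Hx; rewrite ltNge; apply/negP => H; by rewrite mono in Hx.
have Hl' : forall i, i \in I -> fl i = 1%N \/ lstar < L i / (fl i).-1%:R.
  move=> i iI; case: (Hfl i iI) => [->|H]; first by left.
  case: (fl i =P 1%N) => [->|Hne]; first by left.
  right; apply: infeas H; apply: divr_gt0 => //.
  have := (Hpos i iI).1; rewrite ltr0n; move: Hne; case: (fl i) => [|[|m]] //.
have Hu' : forall i, i \in I -> L i / (fu i)%:R <= lstar.
  by move=> i iI; apply: Hmax; apply: Hfu.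
have PI : forall i, i \in I -> _ := fun i iI =>
  @per_i (L i) lstar (fl i) (fu i) (HL i) Hls (Hpos i iI).1 (Hpos i iI).2 (Hl' i iI) (Hu' i iI).
have Hfout : forall i, i \notin I -> fthr (L i) lstar = 0%N.
  move=> i iI; have [Hf Hne] := Hout i iI.
  have Hlt : L i < lstar by rewrite lt_neqAle Hne Hmax.
  have := Pge_thr (L i) lstar 1 (HL i) Hls (ltn0Sn 0).
  rewrite divr1 leNgt Hlt /=; case: (fthr _ _) => //.
set C := candidates L I fl fu.
set S := (\sum_(i in I) (fl i).-1)%N.
have NgeE : count (fun c => lstar <= c) C =
   (\sum_(i in I) count (fun j : nat => (lstar <= L i / j%:R)%R) (index_iota (fl i) (fu i).+1))%N.
  rewrite /C /candidates count_flatten sumnE !big_map big_enum /=.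
  by apply: eq_bigr => i _; rewrite count_map.
have NgtE : count (fun c => lstar < c) C =
   (\sum_(i in I) count (fun j : nat => (lstar < L i / j%:R)%R) (index_iota (fl i) (fu i).+1))%N.
  rewrite /C /candidates count_flatten sumnE !big_map big_enum /=.
  by apply: eq_bigr => i _; rewrite count_map.
have Key1 : (k <= S + count (fun c => (lstar <= c)%R) C)%N.
  have : (k <= \sum_i fthr (L i) lstar)%N.
    case/andP: Hfeas => _; rewrite /mcount.
    rewrite (eq_bigr (fun i => (fthr (L i) lstar)%:Z)); last by move=> i _; rewrite fthrE.
    by rewrite -(big_morph _ PoszD (erefl 0%:Z)) lez_nat.
  move/leq_trans; apply.
  rewrite (bigID (fun i => i \in I)) /=.
  have -> : (\sum_(i < n | i \notin I) fthr (L i) lstar = 0)%N.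
    by apply: big1 => i Hi; rewrite Hfout.
  rewrite addn0.
  rewrite NgeE /S -big_split /=; apply: leq_sum => i iI.
  by case: (PI i iI).
have Key2 : (S + count (fun c => (lstar < c)%R) C < k)%N.
  have -> : (S + count (fun c => (lstar < c)%R) C = \sum_(i in I) gthr (L i) lstar)%N.
    rewrite NgtE /S -big_split /=; apply: eq_bigr => i iI.
    by case: (PI i iI).
  have Hall0 : all (fun y => lstar < y)
     [seq L i / (gthr (L i) lstar)%:R | i <- enum I & (0 < gthr (L i) lstar)%N].
    apply/allP => y /mapP [i]; rewrite mem_filter mem_enum => /andP [Hg iI] ->.
    by case: (PI i iI) => _ _ [H|//]; rewrite H in Hg.
  have [l1 [Hl1 Hall]] := exists_lb _ _ Hall0.
  have l10 : 0 < l1 by apply: lt_trans Hl1.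
  have Hnf : ~~ feasible L k l1.
    apply/negP => /Hmax; rewrite leNgt Hl1 //.
  rewrite /feasible l10 /= -ltNge in Hnf.
  rewrite -ltz_nat; apply: le_lt_trans Hnf.
  rewrite (big_morph _ PoszD (erefl 0%:Z)) /mcount.
  rewrite [X in _ <= X](bigID (fun i => i \in I)) /=.
  rewrite -[X in X <= _]addr0; apply: lerD; last first.
    apply: sumr_ge0 => i _; rewrite floor_ge0 divr_ge0 // ltW //.
  apply: ler_sum => i iI; rewrite floor_ge_int.
  case: (posnP (gthr (L i) lstar)) => Hg; first by rewrite Hg divr_ge0 // ltW.
  have : l1 <= L i / (gthr (L i) lstar)%:R.
    move/allP: Hall; apply; apply/mapP; exists i => //.
    by rewrite mem_filter mem_enum Hg iI.
  rewrite ler_pdivlMr ?ltr0n // mulrC -ler_pdivlMr //.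
have Ek' : k' = (k - S)%N%:Z.
  by rewrite /k' subzn // -/S; lia.
rewrite Ek' /=.
have KS : (0 < k - S)%N by lia.
have Hsort := sort_sorted (fun x y : rat => le_total y x) C.
have Hperm := permP (permEl (perm_sort (fun x y : rat => y <= x) C)).
split.
- rewrite lez_nat; lia.
- rewrite lez_nat leq_subLR; exact: (@leq_trans _ _ _ Key1 (leq_add (leqnn S) (count_size _ C))).
- rewrite /rth_largest; apply/eqP; rewrite eq_le; apply/andP; split.
  + apply: sorted_ge_nth_ge => //; rewrite Hperm prednK // leq_subLR; exact: Key1.
  + apply: sorted_ge_nth_le => //.
      rewrite size_sort prednK // leq_subLR.
      exact: (@leq_trans _ _ _ Key1 (leq_add (leqnn S) (count_size _ C))).
    by rewrite Hperm -ltnS prednK // ltn_subRL.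
Qed.
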